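(* Let $S$ and $T$ be strings and let $(s_1,\dots,s_k)$ be a maximal block decomposition of $S$ with respect to $T$. Then any fragment of $S$ that occurs in $T$ is contained in at most three consecutive blocks $s_i$. Furthermore, any occurrence in $S$ of a longest common substring of $S$ and $T$ contains the first letter of some block.
   Context: A block decomposition of $S$ with respect to $T$ is a sequence of strings $(s_1,\dots,s_k)$ with $S=s_1s_2\cdots s_k$ such that every $s_i$ is a substring of $T$ (the $s_i$ are called blocks, and each corresponds to a fragment of $S$ in the obvious way). It is maximal if $s_is_{i+1}$ is not a substring of $T$ for every $i\in\{1,\dots,k-1\}$. A fragment of $S$ is a contiguous substring $S[i..j]$ at specified positions. A longest common substring of $S$ and $T$ is a longest string that is a substring of both. *)

(* Defs.v *)
From mathcomp Require Import all_boot.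
Set Implicit Arguments. Unset Strict Implicit. Unset Printing Implicit Defensive.

(* Strings over an alphabet A are sequences [seq A]; positions are 0-based. *)

Definition substring (A : eqType) (u t : seq A) : bool := infix u t.

Definition block_decomp (A : eqType) (S T : seq A) (bs : seq (seq A)) : Prop :=
  flatten bs = S /\ all (fun b => substring b T) bs.

Definition maximal_block_decomp (A : eqType) (S T : seq A) (bs : seq (seq A)) : Prop :=
  block_decomp S T bs /\
  forall i, i.+1 < size bs ->
    ~~ substring (nth [::] bs i ++ nth [::] bs i.+1) T.

(* starting position in S of the m-th block (0-based); equals size S for m >= k *)
Definition block_start (A : Type) (bs : seq (seq A)) (m : nat) : nat :=
  sumn (map size (take m bs)).

(* the fragment S[i..j] (inclusive, 0-based) *)
Definition fragment (A : Type) (S : seq A) (i j : nat) : seq A :=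
  drop i (take j.+1 S).

Definition longest_common_substring (A : eqType) (S T w : seq A) : Prop :=
  substring w S /\ substring w T /\
  forall u : seq A, substring u S -> substring u T -> size u <= size w.

(* Main.v *)
Require Import Defs.
From mathcomp Require Import all_boot.
From mathcomp Require Import zify.

Lemma infix_dt (A : eqType) (s : seq A) a b :
  infix (drop a (take b s)) s.
Proof. exact: infix_trans (infix_drop _ _) (infix_take _ _). Qed.

Lemma infix_dt2 (A : eqType) (s : seq A) a b a' b' :
  a <= a' -> a' <= b' -> b' <= b ->
  infix (drop a' (take b' s)) (drop a (take b s)).
Proof.
move=> h1 h2 h3.
have -> : drop a' (take b' s) = drop (a' - a) (take (b' - a) (drop a (take b s))).
  rewrite take_drop drop_drop subnK; last by lia.
  rewrite subnK; last by lia.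
  by rewrite take_takel.
exact: infix_dt.
Qed.

Lemma take_addcat (A : Type) (b r : seq A) x : take (size b + x) (b ++ r) = b ++ take x r.
Proof. by elim: b => //= y b ->. Qed.

Lemma drop_addcat (A : Type) (b r : seq A) x : drop (size b + x) (b ++ r) = drop x r.
Proof. by elim: b. Qed.

Lemma bst_cons (A : Type) (b : seq A) bs n :
  block_start (b :: bs) n.+1 = size b + block_start bs n.
Proof. by []. Qed.

Lemma bst0 (A : Type) (bs : seq (seq A)) : block_start bs 0 = 0.
Proof. by rewrite /block_start take0. Qed.

Lemma bst_mono (A : Type) (bs : seq (seq A)) m n : m <= n -> block_start bs m <= block_start bs n.
Proof.
elim: bs m n => [|b bs IH] m n hmn.
  by rewrite /block_start !take_oversize.
case: m hmn => [|m]; first by rewrite bst0.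
case: n => // n hmn; rewrite !bst_cons leq_add2l; exact: IH.
Qed.

Lemma bst_over (A : Type) (bs : seq (seq A)) n : size bs <= n ->
  block_start bs n = size (flatten bs).
Proof. by move=> h; rewrite /block_start take_oversize // size_flatten. Qed.

Lemma blk1 (A : Type) (bs : seq (seq A)) m : m < size bs ->
  drop (block_start bs m) (take (block_start bs m.+1) (flatten bs)) = nth [::] bs m.
Proof.
elim: bs m => [|b bs IH] // [|m] /= hm.
  by rewrite bst0 drop0 bst_cons bst0 take_addcat take0 cats0.
by rewrite !bst_cons take_addcat drop_addcat IH.
Qed.

Lemma blk2 (A : Type) (bs : seq (seq A)) m : m.+1 < size bs ->
  drop (block_start bs m) (take (block_start bs m.+2) (flatten bs)) =
  nth [::] bs m ++ nth [::] bs m.+1.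
Proof.
elim: bs m => [|b bs IH] // [|m] /= hm.
  rewrite bst0 drop0 bst_cons take_addcat; congr (_ ++ _).
  case: bs hm {IH} => // c cs _ /=.
  by rewrite bst_cons bst0 take_addcat take0 cats0.
by rewrite !bst_cons take_addcat drop_addcat IH.
Qed.

Lemma bst_find (A : Type) (bs : seq (seq A)) p n : p < block_start bs n ->
  exists m, [/\ m < n, block_start bs m <= p & p < block_start bs m.+1].
Proof.
elim: n => [|n IH]; first by rewrite bst0.
move=> h; case: (ltnP p (block_start bs n)) => h2.
  by case: (IH h2) => m [h3 h4 h5]; exists m; split => //; lia.
by exists n.
Qed.

Theorem lemma4 (A : eqType) (S T : seq A) (bs : seq (seq A)) :
  maximal_block_decomp S T bs ->
  (* any fragment S[i..j] occurring in T lies within at most three consecutive blocks *)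
  (forall i j, i <= j -> j < size S -> substring (fragment S i j) T ->
     exists m, block_start bs m <= i /\ j < block_start bs (m + 3)) /\
  (* any occurrence of a longest common substring contains the first letter of a block *)
  (0 < size S ->
   forall w i, longest_common_substring S T w ->
     i + size w <= size S -> take (size w) (drop i S) = w ->
     exists m, [/\ m < size bs, nth [::] bs m != [::] &
                   i <= block_start bs m < i + size w]).
Proof.
move=> [[hS hall] hmax].
have hsz : block_start bs (size bs) = size S by rewrite bst_over // hS.
have blkT : forall m, m < size bs -> infix (nth [::] bs m) T.
  by move=> m hm; move/allP: hall; apply; exact: mem_nth.
split.
  move=> i j hij hj hsub.
  have [m [hm h1 h2]] : exists m, [/\ m < size bs, block_start bs m <= i
                                   & i < block_start bs m.+1].
    by apply: bst_find; rewrite hsz; lia.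
  exists m; split => //.
  case: (ltnP j (block_start bs (m + 3))) => // h3; exfalso.
  case: (leqP (size bs) (m + 3)) => h4.
    by move: h3; rewrite bst_over // hS; lia.
  have := hmax m.+1 ltac:(lia).
  move=> /negP; apply.
  rewrite /substring -blk2; last lia.
  apply: infix_trans hsub.
  rewrite /fragment -hS; apply: infix_dt2; first lia.
    by apply: bst_mono; lia.
  by rewrite (_ : m.+1.+2 = m + 3) //; lia.
move=> Spos w i [wS [wT wmax]] hiw hw.
have wpos : 0 < size w.
  have [m [hm h1 h2]] : exists m, [/\ m < size bs, block_start bs m <= 0
                                   & 0 < block_start bs m.+1].
    by apply: bst_find; rewrite hsz.
  have hsz1 : size (drop 0 (take 1 S)) = 1.
    rewrite drop0 size_take; case: ifP => H; move: H Spos; lia.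
  apply: leq_trans (wmax (drop 0 (take 1 S)) (infix_dt _ _ _ _) _); first by rewrite hsz1.
  apply: infix_trans (blkT m hm).
  rewrite -blk1 // -hS; apply: infix_dt2 => //; lia.
have [m [hm h1 h2]] : exists m, [/\ m < size bs, block_start bs m <= i
                                   & i < block_start bs m.+1].
  by apply: bst_find; rewrite hsz; lia.
have nonempty : forall k, k < size bs -> block_start bs k < block_start bs k.+1 ->
    nth [::] bs k != [::].
  move=> k hk hlt; apply/eqP => he.
  have := @blk1 _ bs k hk; rewrite he => /(congr1 size).
  have := @bst_mono _ bs k.+1 (size bs) hk; rewrite hsz -hS => hb.
  rewrite size_drop size_take; case: ifP => H /=; move: H hlt hb; lia.
case: (ltnP (block_start bs m) i) => h3; last first.
  exists m; split => //; first by apply: nonempty => //; lia.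
  apply/andP; split; lia.
case: (ltnP (block_start bs m.+1) (i + size w)) => h4.
  have [m' [hm' h5 h6]] := @bst_find _ bs (block_start bs m.+1) (size bs)
       ltac:(rewrite hsz; lia).
  have hm'' : m < m'.
    case: (ltnP m m') => // hle.
    by have := @bst_mono _ bs m'.+1 m.+1 ltac:(lia); lia.
  have := @bst_mono _ bs m.+1 m' hm''.
  move=> h7.
  exists m'; split => //; first by apply: nonempty => //; lia.
  apply/andP; split; lia.
exfalso.
have := wmax (drop i.-1 (take (i + size w) S)) (infix_dt _ _ _ _).
have -> : size (drop i.-1 (take (i + size w) S)) = (size w).+1.
  rewrite size_drop size_take; case: ifP => H; move: H hiw h3; lia.
rewrite ltnn => H; suff: false by []; apply: H.
apply: infix_trans (blkT m hm).
rewrite -blk1 // -hS; apply: infix_dt2; lia.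
Qed.
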